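(* For every number of items $m\ge 3$, the class GS of valuations with the gross substitutes property on a set $X$ of $m$ items, viewed as a subset of $\mathbb{R}^{2^m-1}$ (via the coordinates $v(S)$, $\emptyset\ne S\subseteq X$), has Lebesgue measure zero; in particular its interior is empty.
   Context: A valuation on a finite set $X$ is a function $v:2^X\to\mathbb{R}_{\ge 0}$ with $v(\emptyset)=0$ and $v(A)\le v(B)$ whenever $A\subseteq B$. For a price vector $\vec p=(p_x)_{x\in X}$ of reals, $v(S\mid\vec p)=v(S)-\sum_{x\in S}p_x$, and the demand set $D(v\mid\vec p)$ is the family of sets $S\subseteq X$ maximizing $v(S\mid\vec p)$. A valuation $v$ has the gross substitutes property if for every item $i$, every price vector $\vec p$ and every price vector $\vec q\ge\vec p$ (coordinatewise) with $q_i=p_i$, whenever $i\in A$ for some $A\in D(v\mid\vec p)$ there exists $A'\in D(v\mid\vec q)$ with $i\in A'$. *)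

(* Defs.v *)
From mathcomp Require Import all_boot all_order all_algebra.
From mathcomp Require Import reals.
Set Implicit Arguments. Unset Strict Implicit. Unset Printing Implicit Defensive.
Import Order.TTheory GRing.Theory Num.Theory.
Local Open Scope ring_scope.

Section GS.
Variable R : realType.
Variable m : nat.

Definition is_valuation (v : {set 'I_m} -> R) : Prop :=
  v set0 = 0 /\ (forall S, 0 <= v S) /\
  (forall A B : {set 'I_m}, A \subset B -> v A <= v B).

Definition util (v : {set 'I_m} -> R) (p : 'I_m -> R) (S : {set 'I_m}) : R :=
  v S - \sum_(x in S) p x.

Definition in_demand (v : {set 'I_m} -> R) (p : 'I_m -> R) (S : {set 'I_m}) : Prop :=
  forall T : {set 'I_m}, util v p T <= util v p S.

Definition gross_substitutes (v : {set 'I_m} -> R) : Prop :=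
  forall (i : 'I_m) (p q : 'I_m -> R),
    (forall x, p x <= q x) -> q i = p i ->
    (exists A, in_demand v p A /\ i \in A) ->
    exists A', in_demand v q A' /\ i \in A'.

(* Coordinates of R^{2^m - 1}: the nonempty subsets of X. *)
Definition coord := {S : {set 'I_m} | S != set0}.

(* The set function determined by a point x of R^{2^m-1}, with v(emptyset)=0. *)
Definition val_of (x : coord -> R) (S : {set 'I_m}) : R :=
  match insub S with Some s => x s | None => 0 end.

Definition GS_class (x : coord -> R) : Prop :=
  is_valuation (val_of x) /\ gross_substitutes (val_of x).

Definition lebesgue_null (A : (coord -> R) -> Prop) : Prop :=
  forall eps : R, 0 < eps ->
    exists a b : nat -> coord -> R,
      (forall k c, a k c <= b k c) /\
      (forall x, A x -> exists k, forall c, a k c <= x c <= b k c) /\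
      (forall N, \sum_(k < N) \prod_(c : coord) (b k c - a k c) <= eps).

(* Empty interior (Euclidean topology; sup-norm balls generate it). *)
Definition empty_interior (A : (coord -> R) -> Prop) : Prop :=
  forall x, A x -> forall e : R, 0 < e ->
    exists y, (forall c, `|y c - x c| < e) /\ ~ A y.

End GS.

(* Main.v *)
Require Import Defs.
From mathcomp Require Import all_boot all_order all_algebra.
From mathcomp Require Import reals.
From mathcomp Require Import ring lra.
Set Implicit Arguments. Unset Strict Implicit. Unset Printing Implicit Defensive.
Import Order.TTheory GRing.Theory Num.Theory.
Local Open Scope ring_scope.

Section Core.
Variable R : realType.
Variable m : nat.
Implicit Types (v : {set 'I_m} -> R).

Lemma sum_sub3 (a b c : 'I_m) (T : {set 'I_m}) (f : 'I_m -> R) :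
  a != b -> a != c -> b != c ->
  (forall x, x \in T -> [|| x == a, x == b | x == c]) ->
  \sum_(x in T) f x = (if a \in T then f a else 0) + (if b \in T then f b else 0)
                      + (if c \in T then f c else 0).
Proof.
move=> ab ac bc HT.
rewrite big_mkcond (bigD1 a) // (bigD1 b) /=; last by rewrite eq_sym.
rewrite (bigD1 c) /=; last by rewrite eq_sym ac eq_sym bc.
rewrite big1 ?addr0 ?addrA //.
move=> x /andP [/andP [xa xb] xc].
case: ifP => // /HT; by rewrite (negbTE xa) (negbTE xb) (negbTE xc).
Qed.

Lemma set3eq (a b c : 'I_m) (T U : {set 'I_m}) :
  (forall x, x \in T -> [|| x == a, x == b | x == c]) ->
  (forall x, x \in U -> [|| x == a, x == b | x == c]) ->
  (a \in T) = (a \in U) -> (b \in T) = (b \in U) -> (c \in T) = (c \in U) -> T = U.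
Proof.
move=> HT HU ea eb ec; apply/setP => y.
case: (boolP [|| y == a, y == b | y == c]) => [/or3P [] /eqP -> // | ny].
case yT: (y \in T); first by rewrite (HT y yT) in ny.
by case yU: (y \in U) => //; rewrite (HU y yU) in ny.
Qed.

Lemma util_big (v : {set 'I_m} -> R) (r : 'I_m -> R) (T : {set 'I_m}) (x : 'I_m) :
  (forall y, 0 <= r y) -> (forall S, v S <= v setT) -> x \in T ->
  util v r T <= v setT - r x.
Proof.
move=> r0 vB xT; rewrite /util (bigD1 x) //=.
have : 0 <= \sum_(i in T | i != x) r i by apply: sumr_ge0.
have := vB T. lra.
Qed.

Lemma core v (a b c : 'I_m) : is_valuation v -> gross_substitutes v ->
  a != b -> a != c -> b != c ->
  v [set a; c] + v [set b] < v [set a; b] + v [set c] ->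
  v [set b; c] + v [set a] < v [set a; b] + v [set c] -> False.
Proof.
move=> [v0 [vge vmono]] gs ab ac bc H1 H2.
have ba : (b == a) = false by rewrite eq_sym (negbTE ab).
have ca : (c == a) = false by rewrite eq_sym (negbTE ac).
have cb : (c == b) = false by rewrite eq_sym (negbTE bc).
have ab' := negbTE ab; have ac' := negbTE ac; have bc' := negbTE bc.
have vB : forall S, v S <= v setT by move=> S; apply: vmono; apply: subsetT.

have hb_ab : v [set b] <= v [set a; b] by apply: vmono; rewrite sub1set !inE eqxx orbT.
have ha_ab : v [set a] <= v [set a; b] by apply: vmono; rewrite sub1set !inE eqxx.
have hb_bc : v [set b] <= v [set b; c] by apply: vmono; rewrite sub1set !inE eqxx.
have hc_bc : v [set c] <= v [set b; c] by apply: vmono; rewrite sub1set !inE eqxx orbT.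
have hc0 := vge [set c]; have hb0 := vge [set b]; have hB0 := vge setT.
have hbcB := vB [set b; c].
pose p0 := v [set a; b] - v [set b]; pose p2 := v [set b; c] - v [set b].
pose M := 2 * v setT + 1.
pose p x := if x == a then p0 else if x == b then 0 else if x == c then p2 else M.
pose q x := if x == a then p0 else if x == c then p2 else M.
have p0ge : 0 <= p0 by rewrite /p0; lra.
have p2ge : 0 <= p2 by rewrite /p2; lra.
have Mge : 0 <= M by rewrite /M; lra.
have pge : forall y, 0 <= p y by move=> y; rewrite /p; do 3 case: ifP => _ //.
have qge : forall y, 0 <= q y by move=> y; rewrite /q; do 2 case: ifP => _ //.
have pq : forall y, p y <= q y.
  by move=> y; rewrite /p /q; case: ifP => // _; case: ifP => // _; case: ifP => // _.
have sub3 : forall T : {set 'I_m}, (forall x, x \in T -> [|| x == a, x == b | x == c]) \/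
     exists2 x, x \in T & ~~ [|| x == a, x == b | x == c].
  move=> T; case: (pickP [pred x | (x \in T) && ~~ [|| x == a, x == b | x == c]]).
    by move=> x /= /andP [xT nx]; right; exists x.
  move=> H; left => x xT; have := H x; rewrite /= xT /=; by case: [|| _, _ | _].
pose uab := util v p [set a; b]; pose uabc := util v p [set a; b; c].
have Euab : uab = v [set b].
  rewrite /uab /util (@sum_sub3 a b c) //; last by move=> x; rewrite !inE; case: (x == a); case: (x == b); case: (x == c).
  rewrite !inE eqxx ba ca cb ab' /= /p eqxx ba eqxx /p0; lra.
have Euabc : uabc = v [set a; b; c] - p0 - p2.
  rewrite /uabc /util (@sum_sub3 a b c) //; last by move=> x; rewrite !inE; case: (x == a); case: (x == b); case: (x == c).
  rewrite !inE eqxx ba ca cb ab' ac' bc' /= ?orbT /p eqxx ba eqxx ca cb eqxx /=; lra.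
pose A := if uabc <= uab then [set a; b] else [set a; b; c].
have hA : uab <= util v p A /\ uabc <= util v p A.
  rewrite /A; case: ifP => h; rewrite -/uab -/uabc; split; lra.
have demA : in_demand v p A.
  move=> T.
  case: (sub3 T) => [HT | [x xT nx]]; last first.
    have := @util_big v p T x pge vB xT.
    have -> : p x = M by rewrite /p; move: nx; case: (x == a) => //; case: (x == b) => //; case: (x == c).
    rewrite /M; lra.
  suff : util v p T <= uab \/ util v p T <= uabc.
    by case: hA => h1 h2 [] h; lra.
  rewrite Euab Euabc /util (@sum_sub3 a b c T) //.
  have pa : p a = p0 by rewrite /p eqxx.
  have pb : p b = 0 by rewrite /p ba eqxx.
  have pc : p c = p2 by rewrite /p ca cb eqxx.
  rewrite pa pb pc.
  have side : forall U : {set 'I_m}, (forall x, x \in U -> [|| x == a, x == b | x == c]) ->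
     (a \in T) = (a \in U) -> (b \in T) = (b \in U) -> (c \in T) = (c \in U) -> v T = v U.
    by move=> U HU e1 e2 e3; rewrite (@set3eq a b c T U).
  have HU : forall x, x \in [set a; b; c] -> [|| x == a, x == b | x == c].
    by move=> x; rewrite !inE; case: (x == a); case: (x == b); case: (x == c).
  have HUs : forall U : {set 'I_m}, U \subset [set a; b; c] -> forall x, x \in U -> [|| x == a, x == b | x == c].
    by move=> U /subsetP sU x /sU /HU.
  case aT: (a \in T); case bT: (b \in T); case cT: (c \in T).
  - right; rewrite (side [set a; b; c]) ?inE ?eqxx ?orbT //; lra.
  - left; rewrite (side [set a; b]) ?inE ?eqxx ?orbT ?ca ?cb //; first by rewrite /p0; lra.
    by apply: HUs; apply/subsetP => x; rewrite !inE => /orP [] ->; rewrite ?orbT.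
  - left; rewrite (side [set a; c]) ?inE ?eqxx ?orbT ?ba ?bc' //; first by rewrite /p0 /p2; lra.
    by apply: HUs; apply/subsetP => x; rewrite !inE => /orP [] ->; rewrite ?orbT.
  - left; rewrite (side [set a]) ?inE ?eqxx ?ba ?ca //; first by rewrite /p0; lra.
    by apply: HUs; apply/subsetP => x; rewrite !inE => ->.
  - left; rewrite (side [set b; c]) ?inE ?eqxx ?orbT ?ab' ?ac' //; first by rewrite /p2; lra.
    by apply: HUs; apply/subsetP => x; rewrite !inE => /orP [] ->; rewrite ?orbT.
  - left; rewrite (side [set b]) ?inE ?eqxx ?ab' ?cb //; first by lra.
    by apply: HUs; apply/subsetP => x; rewrite !inE => ->; rewrite ?orbT.
  - left; rewrite (side [set c]) ?inE ?eqxx ?ac' ?bc' //; first by rewrite /p2; lra.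
    by apply: HUs; apply/subsetP => x; rewrite !inE => ->; rewrite ?orbT.
  - left; rewrite (side set0) ?v0 ?inE //; [lra | by move=> x; rewrite inE].
have aA : a \in A by rewrite /A; case: ifP => _; rewrite !inE eqxx.
have qa : q a = p a by rewrite /p /q eqxx.
have [A' [demA' aA']] := gs a p q pq qa (ex_intro _ A (conj demA aA)).
have hc := demA' [set c].
have Euc : util v q [set c] = v [set c] - p2 by rewrite /util big_set1 /q ca eqxx.
rewrite Euc in hc.
have hbig : forall x, x \in A' -> q x = M -> False.
  move=> x xA qx; have := @util_big v q A' x qge vB xA; rewrite qx /M; move: hc; rewrite /p2 => hc h; clear -hc h hbcB hb0 hc0 hB0; lra.
case: (sub3 A') => [HT | [x xT nx]]; last first.
  apply: (hbig x xT); rewrite /q; move: nx; case: (x == a) => //; case: (x == b) => //; case: (x == c) => //.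
case bA: (b \in A'); first by apply: (hbig b bA); rewrite /q ba bc'.
move: hc; rewrite /util (@sum_sub3 a b c A') // aA' bA.
have qa' : q a = p0 by rewrite /q eqxx.
have qc : q c = p2 by rewrite /q ca eqxx.
rewrite qa' qc.
case cA: (c \in A').
  rewrite (@set3eq a b c A' [set a; c]) //; first by rewrite /p0 /p2; lra.
  - by move=> x; rewrite !inE; case: (x == a); case: (x == b); case: (x == c).
  - by rewrite !inE eqxx.
  - by rewrite !inE ba bc'.
  - by rewrite !inE eqxx orbT.
rewrite (@set3eq a b c A' [set a]) //; first by rewrite /p0 /p2; lra.
- by move=> x; rewrite !inE => ->.
- by rewrite !inE eqxx.
- by rewrite !inE ba.
- by rewrite !inE ca.
Qed.
End Core.

Section NullGen.
Variable R : realType.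
Variable C : finType.

Definition nullC (A : (C -> R) -> Prop) : Prop :=
  forall eps : R, 0 < eps ->
    exists a b : nat -> C -> R,
      (forall k c, a k c <= b k c) /\
      (forall x, A x -> exists k, forall c, a k c <= x c <= b k c) /\
      (forall N, \sum_(k < N) \prod_(c : C) (b k c - a k c) <= eps).

Lemma sum_sub_uniq (T : eqType) (s X : seq T) (F : T -> R) :
  uniq s -> {subset s <= X} -> uniq X -> (forall t, 0 <= F t) ->
  \sum_(t <- s) F t <= \sum_(t <- X) F t.
Proof.
move=> us sX uX F0.
rewrite [leRHS](bigID (mem s)) /= -(big_filter X).
have -> : \sum_(i <- [seq i <- X | i \in s]) F i = \sum_(t <- s) F t.
  apply: perm_big; apply: uniq_perm; [exact: filter_uniq | exact: us | ].
  move=> x; rewrite mem_filter; apply/andP/idP => [[]//| xs]; split => //; exact: sX.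
rewrite lerDl; apply: sumr_ge0 => ? _; exact: F0.
Qed.

Lemma onth_sum (T : Type) (e : seq T) (F : T -> R) J :
  (forall t, 0 <= F t) -> \sum_(j < J) oapp F 0 (onth e j) <= \sum_(t <- e) F t.
Proof.
move=> F0; elim: e J => [|x e IH] J.
  by rewrite big_nil big1 // => -[[|j] ?] _.
case: J => [|J]; first by rewrite big_ord0 big_cons; apply: addr_ge0 => //; apply: sumr_ge0.
rewrite big_ord_recl big_cons /=; apply: lerD => //; exact: IH.
Qed.

Lemma geom_sum (eps : R) N : 0 <= eps -> \sum_(n < N) eps / 2 ^+ n.+1 <= eps.
Proof.
move=> e0.
suff -> : \sum_(n < N) eps / 2 ^+ n.+1 = eps - eps / 2 ^+ N.
  have : 0 <= eps / 2 ^+ N by apply: divr_ge0 => //; apply: exprn_ge0.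
  lra.
elim: N => [|N IH]; first by rewrite big_ord0 expr0 divr1 subrr.
rewrite big_ord_recr /= IH exprS.
have h2 : (2 : R) ^+ N != 0 by rewrite expf_neq0 // pnatr_eq0.
have h2' : (2 : R) != 0 by rewrite pnatr_eq0.
by field.
Qed.


Lemma onth_index (T : eqType) (s : seq T) (i : T) : i \in s -> onth s (index i s) = Some i.
Proof.
move=> iS; rewrite onthE (nth_map i) ?index_mem // nth_index //.
Qed.

Lemma null_levels (c0 : C) (A : (C -> R) -> Prop) :
  (forall eps, 0 < eps -> exists (I : nat -> finType) (a b : forall n, I n -> C -> R),
     (forall n i c, a n i c <= b n i c) /\
     (forall x, A x -> exists n (i : I n), forall c, a n i c <= x c <= b n i c) /\
     (forall n, \sum_(i : I n) \prod_c (b n i c - a n i c) <= eps / 2 ^+ n.+1)) -> nullC A.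
Proof.
move=> H eps e0; have [I [a [b [ab [cov sm]]]]] := H eps e0.
pose a' k c := if pickle_inv k is Some (n, j) then
   (if onth (index_enum (I n)) j is Some i then a n i c else 0) else 0.
pose b' k c := if pickle_inv k is Some (n, j) then
   (if onth (index_enum (I n)) j is Some i then b n i c else 0) else 0.
pose F n (i : I n) := \prod_c (b n i c - a n i c).
pose G (t : nat * nat) := let (n, j) := t in oapp (@F n) 0 (onth (index_enum (I n)) j).
have F0 : forall n i, 0 <= @F n i by move=> n i; apply: prodr_ge0 => c _; rewrite subr_ge0.
have G0 : forall t, 0 <= G t by move=> [n j]; rewrite /G; case: onth => //= i.
exists a', b'; split; [|split].
- move=> k c; rewrite /a' /b'; case: (pickle_inv k) => [[n j]|] //.
  by case: (onth _ j).
- move=> x Ax; have [n [i hi]] := cov x Ax.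
  exists (pickle (n, index i (index_enum (I n)))).
  by rewrite /a' /b' pickleK_inv onth_index ?mem_index_enum.
move=> N.
have E : forall k, \prod_c (b' k c - a' k c) = oapp G 0 (pickle_inv k).
  move=> k; rewrite /a' /b'; case: (pickle_inv k) => [[n j]|] /=.
    by case: (onth _ j) => [i|] //=; rewrite (bigD1 c0) //= subrr mul0r.
  by rewrite (bigD1 c0) //= subrr mul0r.
under eq_bigr do rewrite E.
rewrite -(big_mkord (fun _ => true) (fun k => oapp G 0 (pickle_inv k))) /index_iota subn0 -big_pmap.
set s := pmap pickle_inv (iota 0 N).
have us : uniq s by apply: pmap_uniq; [exact: pickle_invK | exact: iota_uniq].
pose N0 := (\max_(t <- s) maxn t.1 t.2).+1.
pose X := [seq (n, j) | n <- iota 0 N0, j <- iota 0 N0].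
have uX : uniq X.
  apply: allpairs_uniq; try exact: iota_uniq.
  by move=> [? ?] [? ?] _ _ /= [-> ->].
have sX : {subset s <= X}.
  move=> [n j] ts; apply: allpairs_f; rewrite mem_iota /= add0n /N0 ltnS.
    exact: leq_trans (leq_maxl n j) (@leq_bigmax_seq _ s xpredT (fun t => maxn t.1 t.2) (n, j) ts isT).
  exact: leq_trans (leq_maxr n j) (@leq_bigmax_seq _ s xpredT (fun t => maxn t.1 t.2) (n, j) ts isT).
apply: le_trans (sum_sub_uniq us sX uX G0) _.
rewrite big_allpairs.
apply: le_trans (geom_sum N0 (ltW e0)).
rewrite -(big_mkord xpredT (fun n => eps / 2 ^+ n.+1)) /index_iota subn0.
apply: ler_sum => n _.
apply: le_trans (sm n).
have -> : \sum_(j <- iota 0 N0) G (n, j) = \sum_(j < N0) oapp (@F n) 0 (onth (index_enum (I n)) j).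
  by rewrite -(big_mkord (fun _ => true) (fun j => oapp (@F n) 0 (onth (index_enum (I n)) j))) /index_iota subn0.
exact: (onth_sum _ N0 (@F0 n)).
Qed.

Definition cidx (n N : nat) (y : R) : nat :=
  minn (Num.truncn ((y + n.+1%:R) * N%:R)) (n.+1 * 2 * N).-1.

Lemma cidx_lt n N y : (0 < N)%N -> (cidx n N y < n.+1 * 2 * N)%N.
Proof.
move=> N0; apply: leq_ltn_trans (geq_minr _ _) _; rewrite ltn_predL.
by rewrite !muln_gt0 N0.
Qed.

Lemma cidx_bnd (n N : nat) (y : R) : (0 < N)%N -> `|y| <= n.+1%:R ->
    - n.+1%:R + (cidx n N y)%:R / N%:R <= y <= - n.+1%:R + (cidx n N y)%:R / N%:R + 1 / N%:R.
Proof.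
move=> N0 hy; rewrite /cidx.
set L : R := n.+1%:R. set K := (n.+1 * 2 * N)%N.
have K0 : (0 < K)%N by rewrite /K !muln_gt0 N0.
have Nr : (0 : R) < N%:R by rewrite ltr0n.
set u : R := 1 / N%:R.
have Nu : N%:R * u = 1 by rewrite /u mulrC divrK ?unitfE ?pnatr_eq0 -?lt0n // mul1r.
have u0 : 0 < u by rewrite /u divr_gt0.
have KR : K%:R = L * 2 * N%:R by rewrite /K !natrM.
set t := (y + L) * N%:R.
have yL : - L <= y <= L by rewrite -ler_norml.
have t0 : 0 <= t by apply: mulr_ge0; [lra | exact: ltW].
have tK : t <= K%:R by rewrite KR /t; apply: ler_wpM2r; [exact: ltW | lra].
have yt : y = t * u - L by rewrite /t -mulrA Nu mulr1 addrK.
have [jt tj] : (Num.truncn t)%:R <= t /\ t < (Num.truncn t).+1%:R.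
  by have /andP [] := truncn_itv t0.
set j := Num.truncn t in jt tj.
have [i [-> hi1 hi2]] : exists i, [/\ minn j K.-1 = i, i%:R <= t & t <= i.+1%:R].
  case: (leqP j K.-1) => h.
    by exists j; split => //; exact: ltW.
  exists K.-1; split => //.
    by apply: le_trans jt; rewrite ler_nat ltnW.
  by rewrite prednK.
rewrite -/u yt.
have : 0 <= (t - i%:R) * u by apply: mulr_ge0; lra.
have : 0 <= (i.+1%:R - t) * u by apply: mulr_ge0; lra.
rewrite -natr1 => h1 h2.
have iu : i%:R / N%:R = i%:R * u by rewrite /u mul1r.
rewrite iu; apply/andP; split; nra.
Qed.

Lemma null_hyper (s a b c : 'I_3 -> C) :
  (forall r, [&& a r != s r, b r != s r & c r != s r]) ->
  nullC (fun x => exists r, x (s r) = x (a r) + x (b r) - x (c r)).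
Proof.
move=> hd.
apply: (null_levels (s ord0)) => eps e0.
pose L n : R := n.+1%:R.
pose P n : R := (2 * L n) ^+ #|C|.
pose D n : R := 18 * P n * 2 ^+ n.+1 / eps.
pose N n := (Num.bound (D n)).+1.
have N0 : forall n, (0 < N n)%N by [].
pose h n : R := 1 / (N n)%:R.
have h0 : forall n, 0 < h n by move=> n; rewrite /h divr_gt0 // ltr0n.
pose K n := (n.+1 * 2 * N n)%N.
have K0 : forall n, (0 < K n)%N by move=> n; rewrite /K !muln_gt0.
pose i0 n : 'I_(K n) := Ordinal (K0 n).
pose al n (g : {ffun C -> 'I_(K n)}) k : R := - L n + (g k)%:R / (N n)%:R.
pose phi r (y : C -> R) := y (a r) + y (b r) - y (c r).
pose A n (p : ('I_3 * {ffun C -> 'I_(K n)})%type) k : R :=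
  if k == s p.1 then (if val (p.2 k) == 0%N then phi p.1 (al n p.2) - 3 * h n else 0)
  else al n p.2 k.
pose B n (p : ('I_3 * {ffun C -> 'I_(K n)})%type) k : R :=
  if k == s p.1 then (if val (p.2 k) == 0%N then phi p.1 (al n p.2) + 3 * h n else 0)
  else al n p.2 k + h n.
exists (fun n => ('I_3 * {ffun C -> 'I_(K n)})%type : finType), A, B.
split; [|split].
- move=> n [r g] k; rewrite /A /B /=; have := h0 n.
  case: ifP => _; [case: ifP => _ |]; lra.
- move=> x [r hx].
  pose n := Num.bound (\sum_k `|x k|).
  have hxk : forall k, `|x k| <= n.+1%:R.
    move=> k; have s0 : 0 <= \sum_k `|x k| by apply: sumr_ge0 => k' _; exact: normr_ge0.
    have := archi_boundP s0.
    rewrite -/n (bigD1 k) //=.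
    have : 0 <= \sum_(i | i != k) `|x i| by apply: sumr_ge0.
    have : (n%:R : R) <= n.+1%:R by rewrite ler_nat.
    lra.
  pose g : {ffun C -> 'I_(K n)} :=
    [ffun k => if k == s r then i0 n else Ordinal (@cidx_lt n (N n) (x k) (N0 n))].
  exists n, (r, g) => k.
  have cb : forall k, k != s r -> al n g k <= x k <= al n g k + h n.
    move=> k' ks; rewrite /al ffunE (negbTE ks) /=; exact: cidx_bnd.
  rewrite /A /B /=; case: ifP => [/eqP -> | ks]; last exact: cb (negbT ks).
  rewrite ffunE eqxx /= hx /phi.
  move: (hd r) => /and3P [ha hb hc].
  move: (cb _ ha) (cb _ hb) (cb _ hc) (h0 n) => /andP[? ?] /andP[? ?] /andP[? ?] ?.
  apply/andP; split; lra.
move=> n.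
pose W r k (i : 'I_(K n)) : R := if k == s r then (if val i == 0%N then 6 * h n else 0) else h n.
have E : forall p : ('I_3 * {ffun C -> 'I_(K n)}), \prod_k (B n p k - A n p k) = \prod_k W p.1 k (p.2 k).
  move=> [r g]; apply: eq_bigr => k _; rewrite /A /B /W /=.
  by case: ifP => _; [case: ifP => _|]; rewrite /phi; lra.
under eq_bigr do rewrite E.
rewrite -(pair_bigA _ (fun r (g : {ffun C -> 'I_(K n)}) => \prod_k W r k (g k))) /=.
under eq_bigr do rewrite -bigA_distr_bigA.
have L1 : 1 <= L n by rewrite /L ler1n.
have hN : h n * (N n)%:R = 1 by rewrite /h mul1r mulVf // pnatr_eq0 -lt0n.
have Hr : forall r, \prod_k \sum_i W r k i <= 6 * h n * P n.
  move=> r; rewrite (bigD1 (s r)) //=.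
  have -> : \sum_i W r (s r) i = 6 * h n.
    rewrite (bigD1 (i0 n)) //= big1 ?addr0; first by rewrite /W eqxx.
    move=> i ii0; rewrite /W eqxx; case: ifP => // /eqP hi.
    by move: ii0; have -> : i = i0 n by apply: val_inj.
  have -> : \prod_(k | k != s r) \sum_i W r k i = \prod_(k | k != s r) (2 * L n).
    apply: eq_bigr => k ks; rewrite /W (negbTE ks) sumr_const card_ord -[h n *+ _]mulr_natl /K !natrM -/(L n).
    by rewrite -mulrA (mulrC _ (h n)) hN mulr1 mulrC.
  apply: ler_wpM2l; first by have := h0 n; lra.
  rewrite prodr_const /P; apply: ler_weXn2l; first lra.
  exact: max_card.
apply: le_trans (ler_sum _ (fun r _ => Hr r)) _.
rewrite sumr_const card_ord.
have Dn : D n <= (N n)%:R.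
  have D0 : 0 <= D n.
    rewrite /D; apply: divr_ge0; last exact: ltW.
    apply: mulr_ge0; [apply: mulr_ge0 => //; rewrite /P; apply: exprn_ge0 |]; last exact: exprn_ge0.
    lra.
  rewrite /N -natr1; have := archi_boundP D0; lra.
have E2 : (0 : R) < 2 ^+ n.+1 by apply: exprn_gt0.
rewrite ler_pdivlMr //.
have : D n * eps <= (N n)%:R * eps by apply: ler_wpM2r => //; exact: ltW.
have -> : D n * eps = 18 * P n * 2 ^+ n.+1 by rewrite /D -mulrA mulVf ?mulr1 // gt_eqF.
move=> hD.
have -> : 6 * h n * P n *+ 3 * 2 ^+ n.+1 = (18 * P n * 2 ^+ n.+1) * h n.
  rewrite -mulr_natl; ring.
have -> : eps = ((N n)%:R * eps) * h n by rewrite (mulrC (N n)%:R) -mulrA (mulrC _ (h n)) hN mulr1.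
apply: ler_wpM2r => //; exact: ltW.
Qed.

End NullGen.

Section T.
Variable R : realType.
Variable m : nat.
Hypothesis m3 : (3 <= m)%N.

Lemma ne0 (x : 'I_m) (S : {set 'I_m}) : x \in S -> S != set0.
Proof. by move=> xS; apply/set0Pn; exists x. Qed.

Lemma val_ofE (x : Defs.coord m -> R) (S : {set 'I_m}) (H : S != set0) :
  val_of x S = x (exist _ S H).
Proof. by rewrite /val_of insubT. Qed.

Lemma neqc (S T : {set 'I_m}) (HS : S != set0) (HT : T != set0) (y : 'I_m) :
  (y \in S) != (y \in T) -> (exist _ S HS : Defs.coord m) != exist _ T HT.
Proof. by move=> hy; apply/negP => /eqP [E]; move: hy; rewrite E eqxx. Qed.

Definition ia : 'I_m := Ordinal (leq_trans (isT : (0 < 3)%N) m3).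
Definition ib : 'I_m := Ordinal (leq_trans (isT : (1 < 3)%N) m3).
Definition ic : 'I_m := Ordinal (leq_trans (isT : (2 < 3)%N) m3).

Lemma GS3 (x : Defs.coord m -> R) : GS_class x ->
  let v := val_of x in
  [\/ v [set ia; ib] + v [set ic] = v [set ia; ic] + v [set ib],
      v [set ia; ib] + v [set ic] = v [set ib; ic] + v [set ia] |
      v [set ia; ic] + v [set ib] = v [set ib; ic] + v [set ia]].
Proof.
move=> [hv hg] v.
have h1 := @core R m v ia ib ic hv hg isT isT isT.
have h2 := @core R m v ia ic ib hv hg isT isT isT.
have h3 := @core R m v ib ic ia hv hg isT isT isT.
rewrite [[set ic; ib]]setUC in h2.
rewrite [[set ib; ia]]setUC [[set ic; ia]]setUC in h3.
set Qc := v [set ia; ib] + v [set ic] in h1 h2 h3 *.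
set Qb := v [set ia; ic] + v [set ib] in h1 h2 h3 *.
set Qa := v [set ib; ic] + v [set ia] in h1 h2 h3 *.
case: (eqVneq Qc Qb) => [->|n1]; first by apply: Or31.
case: (eqVneq Qc Qa) => [->|n2]; first by apply: Or32.
case: (eqVneq Qb Qa) => [->|n3]; first by apply: Or33.
exfalso.
move: n1 n2 n3; rewrite !neq_lt => /orP[?|?] /orP[?|?] /orP[?|?];
  (try (by apply: h1; lra)); (try (by apply: h2; lra)); (try (by apply: h3; lra)); lra.
Qed.

Lemma nullC_sub (C : finType) (A B : (C -> R) -> Prop) :
  (forall x, A x -> B x) -> nullC B -> nullC A.
Proof.
move=> AB hB eps e0; have [a [b [h1 [h2 h3]]]] := hB eps e0.
by exists a, b; split => //; split => // x /AB /h2.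
Qed.

Lemma null_GS : lebesgue_null (@GS_class R m).
Proof.
have Hab : [set ia; ib] != set0 by apply: (@ne0 ia); rewrite !inE eqxx.
have Hac : [set ia; ic] != set0 by apply: (@ne0 ia); rewrite !inE eqxx.
have Hbc : [set ib; ic] != set0 by apply: (@ne0 ib); rewrite !inE eqxx.
have Ha : [set ia] != set0 by apply: (@ne0 ia); rewrite !inE eqxx.
have Hb : [set ib] != set0 by apply: (@ne0 ib); rewrite !inE eqxx.
have Hc : [set ic] != set0 by apply: (@ne0 ic); rewrite !inE eqxx.
pose cab : Defs.coord m := exist (fun S => S != set0) _ Hab.
pose cac : Defs.coord m := exist (fun S => S != set0) _ Hac.
pose cbc : Defs.coord m := exist (fun S => S != set0) _ Hbc.
pose ca : Defs.coord m := exist (fun S => S != set0) _ Ha.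
pose cb : Defs.coord m := exist (fun S => S != set0) _ Hb.
pose cc : Defs.coord m := exist (fun S => S != set0) _ Hc.
pose sF (r : 'I_3) := if val r == 0%N then cab else if val r == 1%N then cab else cac.
pose aF (r : 'I_3) := if val r == 0%N then cac else if val r == 1%N then cbc else cbc.
pose bF (r : 'I_3) := if val r == 0%N then cb else if val r == 1%N then ca else ca.
pose cF (r : 'I_3) := if val r == 0%N then cc else if val r == 1%N then cc else cb.
have hd : forall r, [&& aF r != sF r, bF r != sF r & cF r != sF r].
  move=> [[|[|[|k]]] Hk] //=; rewrite /aF /bF /cF /sF /=.
  - apply/and3P; split.
    + by apply: (@neqc _ _ _ _ ic); rewrite !inE.
    + by apply: (@neqc _ _ _ _ ia); rewrite !inE.
    + by apply: (@neqc _ _ _ _ ia); rewrite !inE.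
  - apply/and3P; split.
    + by apply: (@neqc _ _ _ _ ic); rewrite !inE.
    + by apply: (@neqc _ _ _ _ ib); rewrite !inE.
    + by apply: (@neqc _ _ _ _ ia); rewrite !inE.
  - apply/and3P; split.
    + by apply: (@neqc _ _ _ _ ib); rewrite !inE.
    + by apply: (@neqc _ _ _ _ ic); rewrite !inE.
    + by apply: (@neqc _ _ _ _ ia); rewrite !inE.
have := @null_hyper R (Defs.coord m) sF aF bF cF hd.
apply: nullC_sub => x /GS3 /=.
rewrite (val_ofE x Hab) (val_ofE x Hac) (val_ofE x Hbc) (val_ofE x Ha) (val_ofE x Hb) (val_ofE x Hc).
rewrite -/cab -/cac -/cbc -/ca -/cb -/cc.
case=> E.
- exists (@Ordinal 3 0 isT); rewrite /sF /aF /bF /cF /=; lra.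
- exists (@Ordinal 3 1 isT); rewrite /sF /aF /bF /cF /=; lra.
- exists (@Ordinal 3 2 isT); rewrite /sF /aF /bF /cF /=; lra.
Qed.

Lemma val_of_bump (x : Defs.coord m -> R) (c0 : Defs.coord m) (d : R) (S : {set 'I_m}) :
  val_of (fun k => x k + (if k == c0 then d else 0)) S
  = val_of x S + (if S == val c0 then d else 0).
Proof.
rewrite /val_of; case: insubP => [u HS uE|HS].
  by rewrite -uE (inj_eq val_inj).
have /eqP -> := negbNE HS.
by rewrite eq_sym (negbTE (valP c0)) addr0.
Qed.

Lemma neqS (S T : {set 'I_m}) (y : 'I_m) : (y \in S) != (y \in T) -> (S == T) = false.
Proof. by move=> h; apply/negbTE/negP => /eqP E; move: h; rewrite E eqxx. Qed.

Lemma bumpQ (x : Defs.coord m -> R) (p q r : 'I_m) : p != q -> p != r -> q != r ->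
  val_of x [set p; r] + val_of x [set q] <= val_of x [set p; q] + val_of x [set r] ->
  val_of x [set q; r] + val_of x [set p] <= val_of x [set p; q] + val_of x [set r] ->
  forall e : R, 0 < e -> exists y, (forall k, `|y k - x k| < e) /\ ~ GS_class y.
Proof.
move=> pq pr qr h1 h2 e e0.
have qp : (q == p) = false by rewrite eq_sym (negbTE pq).
have rp : (r == p) = false by rewrite eq_sym (negbTE pr).
have rq : (r == q) = false by rewrite eq_sym (negbTE qr).
have pq' := negbTE pq; have pr' := negbTE pr; have qr' := negbTE qr.
have Hpq : [set p; q] != set0 by apply: (@ne0 p); rewrite !inE eqxx.
pose c0 : Defs.coord m := exist (fun S => S != set0) _ Hpq.
pose y := fun k => x k + (if k == c0 then e / 2 else 0).
exists y; split.
  move=> k; have -> : y k - x k = (if k == c0 then e / 2 else 0) by rewrite /y addrAC subrr add0r.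
  by case: ifP => _; rewrite ?normr0 ?ger0_norm //; lra.
move=> [hv hg]; apply: (@core R m (val_of y) p q r hv hg pq pr qr); rewrite /y !val_of_bump /= eqxx.
- rewrite (@neqS [set p; r] [set p; q] r); last by rewrite !inE eqxx rp rq.
  rewrite (@neqS [set q] [set p; q] p); last by rewrite !inE eqxx pq'.
  rewrite (@neqS [set r] [set p; q] p); last by rewrite !inE eqxx pr'.
  lra.
- rewrite (@neqS [set q; r] [set p; q] p); last by rewrite !inE eqxx pq' pr'.
  rewrite (@neqS [set p] [set p; q] q); last by rewrite !inE eqxx qp.
  rewrite (@neqS [set r] [set p; q] p); last by rewrite !inE eqxx pr'.
  lra.
Qed.

Lemma interior_GS : empty_interior (@GS_class R m).
Proof.
move=> x _ e e0.
set v := val_of x.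
have cUa : [set ic; ib] = [set ib; ic] by rewrite setUC.
have cUb : [set ib; ia] = [set ia; ib] by rewrite setUC.
have cUc : [set ic; ia] = [set ia; ic] by rewrite setUC.
set Qc := v [set ia; ib] + v [set ic].
set Qb := v [set ia; ic] + v [set ib].
set Qa := v [set ib; ic] + v [set ia].
have bc : Qb <= Qc -> Qa <= Qc -> exists y, (forall k, `|y k - x k| < e) /\ ~ GS_class y.
  by move=> h1 h2; apply: (@bumpQ x ia ib ic) => //.
have bb : Qc <= Qb -> Qa <= Qb -> exists y, (forall k, `|y k - x k| < e) /\ ~ GS_class y.
  by move=> h1 h2; apply: (@bumpQ x ia ic ib) => //; rewrite -/v ?cUa //.
have ba : Qc <= Qa -> Qb <= Qa -> exists y, (forall k, `|y k - x k| < e) /\ ~ GS_class y.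
  by move=> h1 h2; apply: (@bumpQ x ib ic ia) => //; rewrite -/v ?cUb ?cUc //.
case: (lerP Qb Qc) => h1; case: (lerP Qa Qc) => h2.
- exact: bc.
- apply: ba; lra.
- apply: bb; lra.
- case: (lerP Qa Qb) => h3; [apply: bb | apply: ba]; lra.
Qed.

End T.

Theorem theorem7 (R : realType) (m : nat) : (3 <= m)%N ->
  lebesgue_null (@GS_class R m) /\ empty_interior (@GS_class R m).
Proof.
move=> m3; split; [exact: (@null_GS R m m3) | exact: (@interior_GS R m m3)].
Qed.
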